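(* Let $D=(V,A,w)$ be a weighted digraph and let $M$ be a matching in $D$ (a set of arcs no two of which share an endpoint). Then $\mathrm{mac}(D)\ge\frac{w(D)}{4}+\frac{w(M)}{4}$.
   Context: A weighted digraph $D=(V,A,w)$ is a digraph without loops or parallel arcs (opposite arcs allowed) with weights $w:A\to\mathbb{R}_{\ge0}$; $w(\cdot)$ of an arc set is its total weight. For a partition $(X,Y)$ of $V$, $w(X,Y)$ is the total weight of arcs from $X$ to $Y$, and $\mathrm{mac}(D)=\max_{(X,Y)}w(X,Y)$. *)

(* Defs.v *)
From mathcomp Require Import all_boot all_order all_algebra.
Set Implicit Arguments. Unset Strict Implicit. Unset Printing Implicit Defensive.
Import Order.TTheory GRing.Theory Num.Theory.
Local Open Scope ring_scope.

(* A weighted digraph on vertex set V (a finType): arc relation A (no loops;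
   as a relation there are no parallel arcs, opposite arcs allowed) and
   nonnegative weights w on arcs. *)
Definition loopless (V : finType) (A : rel V) := forall x, ~~ A x x.

Definition wset (R : numDomainType) (V : finType) (w : V -> V -> R)
  (S : {set V * V}) : R := \sum_(a in S) w a.1 a.2.

Definition wtotal (R : numDomainType) (V : finType) (A : rel V)
  (w : V -> V -> R) : R := \sum_(a : V * V | A a.1 a.2) w a.1 a.2.

Definition wcut (R : numDomainType) (V : finType) (A : rel V)
  (w : V -> V -> R) (X Y : {set V}) : R :=
  \sum_(a : V * V | [&& A a.1 a.2, a.1 \in X & a.2 \in Y]) w a.1 a.2.

Definition mac (R : realDomainType) (V : finType) (A : rel V)
  (w : V -> V -> R) : R :=
  \big[Num.max/0]_(X : {set V}) wcut A w X (~: X).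

Definition is_matching (V : finType) (A : rel V) (M : {set V * V}) :=
  (forall a, a \in M -> A a.1 a.2) /\
  (forall a b, a \in M -> b \in M -> a != b ->
     [/\ a.1 != b.1, a.1 != b.2, a.2 != b.1 & a.2 != b.2]).

(* Main.v *)
Require Import Defs.
From mathcomp Require Import all_boot all_order all_algebra.
From mathcomp Require Import ring lra.
Import Order.TTheory GRing.Theory Num.Theory.
Local Open Scope ring_scope.

Section Count.
Variables (R : realFieldType) (V : finType).

Definition tog (u : V) (S : {set V}) : {set V} :=
  if u \in S then S :\ u else u |: S.

Lemma tog_inv u : involutive (tog u).
Proof.
move=> S; rewrite /tog; case: (boolP (u \in S)) => uS.
  rewrite setD11 setD1K //.
by rewrite setU11 setU1K.
Qed.

Lemma tog_in u S : (u \in tog u S) = ~~ (u \in S).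
Proof. by rewrite /tog; case: (u \in S); rewrite ?setD11 ?setU11. Qed.

Lemma tog_out u v S : u != v -> (v \in tog u S) = (v \in S).
Proof.
move=> uv; rewrite /tog; case: (u \in S); rewrite ?in_setD1 ?in_setU1;
  by rewrite eq_sym (negbTE uv).
Qed.

Definition NN : R := \sum_(S : {set V}) 1.

Definition cnt1 u p : R := \sum_(S : {set V}) ((u \in S) == p)%:R.
Definition cnt2 u v p q : R :=
  \sum_(S : {set V}) (((u \in S) == p) && ((v \in S) == q))%:R.

Lemma cnt1_tog u p : cnt1 u p = cnt1 u (~~ p).
Proof.
rewrite /cnt1 (reindex_inj (can_inj (tog_inv u))) /=.
by apply: eq_bigr => S _; rewrite tog_in; case: (u \in S); case: p.
Qed.

Lemma cnt1E u p : cnt1 u p = NN / 2%:R.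
Proof.
have : cnt1 u p + cnt1 u (~~ p) = NN.
  rewrite /cnt1 /NN -big_split /=; apply: eq_bigr => S _.
  by case: (u \in S); case: p; rewrite /= ?addr0 ?add0r.
rewrite -cnt1_tog => H; rewrite -H; lra.
Qed.

Lemma cnt2E u v p q : u != v -> cnt2 u v p q = NN / 4%:R.
Proof.
move=> uv.
have E1 : forall p q, cnt2 u v p q = cnt2 u v (~~ p) q.
  move=> p' q'; rewrite /cnt2 (reindex_inj (can_inj (tog_inv u))) /=.
  apply: eq_bigr => S _; rewrite tog_in tog_out //.
  by case: (u \in S); case: p'.
have vu : v != u by rewrite eq_sym.
have E2 : forall p q, cnt2 u v p q = cnt2 u v p (~~ q).
  move=> p' q'; rewrite /cnt2 (reindex_inj (can_inj (tog_inv v))) /=.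
  apply: eq_bigr => S _; rewrite tog_in tog_out //.
  by case: (v \in S); case: q'.
have S1g : forall p q, cnt2 u v p q + cnt2 u v p (~~ q) = cnt1 u p.
  move=> p' q'; rewrite /cnt2 /cnt1 -big_split /=; apply: eq_bigr => S _.
  by case: (u \in S); case: (v \in S); case: p'; case: q'; rewrite /= ?addr0 ?add0r.
have S2 : cnt1 u p + cnt1 u (~~ p) = NN.
  rewrite /cnt1 /NN -big_split /=; apply: eq_bigr => S _.
  by case: (u \in S); case: p; rewrite /= ?addr0 ?add0r.
have H1 := E1 p q; have H2 := E2 (~~ p) q; have H3 := E1 p (~~ q).
have S1 := S1g p q; have S3 := S1g (~~ p) q.
lra.
Qed.

Lemma NN_ge0 : 0 <= NN.
Proof. by apply: sumr_ge0 => S _; rewrite ler01. Qed.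

Lemma NN_gt0 : 0 < NN.
Proof.
rewrite /NN (bigD1 set0) //= ltr_wpDr ?ltr01 //.
by apply: sumr_ge0 => S _; rewrite ler01.
Qed.

End Count.

Lemma le_bigmax_seq (R : realDomainType) (I : eqType) (r : seq I)
  (f : I -> R) x : x \in r -> f x <= \big[Num.max/0]_(i <- r) f i.
Proof.
elim: r => [|y r IH] //=; rewrite in_cons big_cons => /orP [/eqP -> | xr].
  by rewrite le_max lexx.
by rewrite le_max IH ?orbT.
Qed.

Theorem mainTheorem5 (R : realFieldType) (V : finType) (A : rel V)
  (w : V -> V -> R) (M : {set V * V}) :
  loopless A ->
  (forall x y, A x y -> 0 <= w x y) ->
  is_matching A M ->
  mac A w >= wtotal A w / 4%:R + wset w M / 4%:R.
Proof.
move=> loopA w0 [MA Mm].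
pose h x := [exists u, (u, x) \in M].
pose g x := odflt x [pick u | (u, x) \in M].
have gE : forall u x, (u, x) \in M -> g x = u.
  move=> u x ux; rewrite /g; case: pickP => [u' /= u'x | /(_ u) /= ]; last by rewrite ux.
  apply/eqP; apply: contraT => ne.
  have ne2 : (u', x) != (u, x) by apply: contra ne => /eqP [->].
  by case: (Mm _ _ u'x ux ne2) => _ _ _ /=; rewrite eqxx.
have gN : forall x, ~~ h x -> g x = x.
  move=> x; rewrite /h /g negb_exists => /forallP H.
  by case: pickP => // u ux; move: (H u); rewrite ux.
pose X (S : {set V}) := [set x | (g x \in S) != h x].
pose N := NN R V.
have key : forall x y, A x y ->
    N / 4%:R + ((x, y) \in M)%:R * (N / 4%:R) <=
    \sum_(S : {set V}) (((g x \in S) != h x) && ~~ ((g y \in S) != h y))%:R.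
  move=> x y Axy.
  have xy : x != y by apply/eqP => exy; move: (loopA x); rewrite {2}exy Axy.
  have N0 := NN_ge0 R V.
  case: (eqVneq (g x) (g y)) => gxy.
    have hxy : h y = ~~ h x.
      case hx: (h x); case hy: (h y) => //.
        move: hx hy => /existsP [u ux] /existsP [v vy].
        move: gxy; rewrite (gE _ _ ux) (gE _ _ vy) => uv; subst v.
        have ne : (u, x) != (u, y) by apply: contra xy => /eqP [->].
        by case: (Mm _ _ ux vy ne); rewrite eqxx.
      move: gxy; rewrite !gN ?hx ?hy // => /eqP; by rewrite (negbTE xy).
    apply: (@le_trans _ _ (@cnt1 R V (g x) (~~ h x))); last first.
      rewrite le_eqVlt; apply/orP; left; apply/eqP.
      apply: eq_bigr => S _; rewrite -gxy hxy.
      by case: (g x \in S); case: (h x).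
    rewrite cnt1E -/N.
    have : ((x, y) \in M)%:R <= (1 : R) by case: ((x,y) \in M); rewrite ?ler01.
    move=> H; have : ((x, y) \in M)%:R * (N / 4%:R) <= N / 4%:R.
      by rewrite ler_piMl // divr_ge0.
    lra.
  have -> : ((x, y) \in M) = false.
    apply/negP => xyM; move: gxy; rewrite (gE _ _ xyM).
    have hx : ~~ h x.
      apply/existsP => -[u ux].
      case: (eqVneq (u, x) (x, y)) => [E | ne]; first by case: E => _ E2; rewrite E2 eqxx in xy.
      by case: (Mm _ _ ux xyM ne) => _ _ /=; rewrite eqxx.
    by rewrite gN // eqxx.
  apply: (@le_trans _ _ (@cnt2 R V (g x) (g y) (~~ h x) (h y))); last first.
    rewrite le_eqVlt; apply/orP; left; apply/eqP.
    apply: eq_bigr => S _.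
    by case: (g x \in S); case: (h x); case: (g y \in S); case: (h y).
  by rewrite cnt2E // mul0r addr0.
have cutE : forall S, wcut A w (X S) (~: X S) =
    \sum_(a : V * V | A a.1 a.2)
      (((g a.1 \in S) != h a.1) && ~~ ((g a.2 \in S) != h a.2))%:R * w a.1 a.2.
  move=> S; rewrite /wcut big_mkcondr /=; apply: eq_bigr => a _.
  rewrite in_setC !inE.
  by case: ((g a.1 \in S) != h a.1); case: ((g a.2 \in S) != h a.2);
    rewrite /= ?mul1r ?mul0r.
have Nmac : \sum_(S : {set V}) wcut A w (X S) (~: X S) <= N * mac A w.
  rewrite /N /NN mulr_suml; apply: ler_sum => S _; rewrite mul1r.
  rewrite /mac; have := @le_bigmax_seq R _ (index_enum {set V}) (fun X0 => wcut A w X0 (~: X0)) (X S) (mem_index_enum _); exact.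
have Npos : 0 < N by apply: NN_gt0.
clearbody N.
have lower : N * (wtotal A w / 4%:R + wset w M / 4%:R) <=
    \sum_(S : {set V}) wcut A w (X S) (~: X S).
  under eq_bigr => S _ do rewrite cutE.
  rewrite exchange_big /=.
  have -> : N * (wtotal A w / 4%:R + wset w M / 4%:R) =
      \sum_(a : V * V | A a.1 a.2)
        (N / 4%:R + (a \in M)%:R * (N / 4%:R)) * w a.1 a.2.
    rewrite /wtotal /wset mulrDr.
    have -> : \sum_(a in M) w a.1 a.2 =
        \sum_(a : V * V | A a.1 a.2) (a \in M)%:R * w a.1 a.2.
      rewrite big_mkcond [RHS]big_mkcond /=; apply: eq_bigr => a _.
      case aM: (a \in M); last by rewrite !mul0r; case: (A _ _).
      by rewrite (MA _ aM) mul1r.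
    rewrite !mulr_suml !mulr_sumr -big_split /=; apply: eq_bigr => a _.
    by field.
  apply: ler_sum => a Aa; rewrite -mulr_suml.
  apply: ler_wpM2r; first by apply: w0.
  by case: a Aa => x y /= Axy; apply: key.
have := le_trans lower Nmac.
by rewrite ler_pM2l.
Qed.
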